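(* Let $n,m\ge1$ and let $p=p_{n,m}$ be stable of degree $n$ in $z$ and $m$ in $w$. Define $$L(z,w;\eta)=z^n\,\frac{p(z,w)\overline{p(1/\bar z,\eta)}-\tilde p(z,w)\overline{\tilde p(1/\bar z,\eta)}}{1-w\bar\eta}.$$ Then: (1) $L$ is a polynomial in $(z,w,\bar\eta)$, of degree at most $2n$ in $z$, at most $m-1$ in $w$ and at most $m-1$ in $\bar\eta$; (2) as $\eta$ ranges over $\mathbb{C}$, the polynomials $L(\cdot,\cdot;\eta)$ span a vector space of dimension exactly $m$; (3) $L(z,w;\eta)=z^{2n}(w\bar\eta)^{m-1}\overline{L(1/\bar z,1/\bar w;1/\bar\eta)}$; consequently, writing $L(z,w;\eta)=\sum_{j=0}^{m-1}a_j(z,w)\bar\eta^j$, one has $a_k(z,w)=z^{2n}w^{m-1}\overline{a_{m-k-1}(1/\bar z,1/\bar w)}$ for $0\le k\le m-1$; (4) there are polynomials $A(z,w;\eta)$, $B(z,w;\eta)$ in $(z,w,\bar\eta)$, of degree at most $n$ in $z$, at most $m-1$ in $w$ and at most $m-1$ in $\bar\eta$, such that $L=p\,A+\tilde p\,B$.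
   Context: A polynomial $p\in\mathbb{C}[z,w]$ is stable if $p(z,w)\neq0$ whenever $|z|\le1,|w|\le1$. The reflection is $\tilde p(z,w)=z^nw^m\overline{p(1/\bar z,1/\bar w)}$. Here $\eta\in\mathbb{C}$ is a parameter and the expression for $L$ is understood as a rational function in $z,w,\bar\eta$. *)

(* Defs.v *)
(* C : numClosedFieldType plays the role of the complex numbers. *)
From HB Require Import structures.
From mathcomp Require Import all_boot all_order all_algebra.
Set Implicit Arguments. Unset Strict Implicit. Unset Printing Implicit Defensive.
Import Order.TTheory GRing.Theory Num.Theory.
Local Open Scope ring_scope.

Section Defs.
Variable C : numClosedFieldType.

(* Bivariate polynomials p(z,w) : {poly {poly C}}, outer variable w, inner z:
   p = \sum_j p`_j(z) w^j. *)
Definition ev2 (p : {poly {poly C}}) (z w : C) : C := (p.[w%:P]).[z].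

(* Trivariate polynomials P(z,w,e) : {poly {poly {poly C}}}, outer variable e
   (standing for conj eta), then w, then z.  evL P z w eta = P(z, w, conj eta). *)
Definition ev3 (P : {poly {poly {poly C}}}) (z w e : C) : C :=
  ((P.[e%:P%:P]).[w%:P]).[z].
Definition evL (P : {poly {poly {poly C}}}) (z w eta : C) : C := ev3 P z w (eta^*).

Definition bideg (n m : nat) (p : {poly {poly C}}) : Prop :=
  size p = m.+1 /\ (forall j, leq (size p`_j) n.+1) /\ (exists j, size p`_j = n.+1).

Definition stable (p : {poly {poly C}}) : Prop :=
  forall z w : C, `|z| <= 1 -> `|w| <= 1 -> ev2 p z w != 0.

(* reflection  ptilde(z,w) = z^n w^m conj(p(1/conj z, 1/conj w)), written as
   the polynomial it equals: coefficient of z^i w^j is conj(p_{n-i,m-j}). *)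
Definition refl (n m : nat) (p : {poly {poly C}}) : {poly {poly C}} :=
  \poly_(j < m.+1) \poly_(i < n.+1) ((p`_(m - j))`_(n - i))^*.

Definition Lfun (n m : nat) (p : {poly {poly C}}) (z w eta : C) : C :=
  z ^+ n * (ev2 p z w * (ev2 p (z^*)^-1 eta)^*
            - ev2 (refl n m p) z w * (ev2 (refl n m p) (z^*)^-1 eta)^*)
  / (1 - w * eta^*).

Definition degs3 (dz dw de : nat) (P : {poly {poly {poly C}}}) : Prop :=
  leq (size P) de.+1 /\ (forall k, leq (size P`_k) dw.+1) /\
  (forall k j, leq (size (P`_k)`_j) dz.+1).

End Defs.

(* Main.v *)
Require Import Defs.
From HB Require Import structures.
From mathcomp Require Import all_boot all_order all_algebra.
From mathcomp Require Import ring zify.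
Import Order.TTheory GRing.Theory Num.Theory.
Local Open Scope ring_scope.
Set Implicit Arguments. Unset Strict Implicit. Unset Printing Implicit Defensive.

Section Main.
Variable C : numClosedFieldType.
Variables (n m : nat) (p : {poly {poly C}}).

Definition Ek (q : {poly {poly C}}) (k : nat) : {poly {poly C}} :=
  \poly_(i < k.+1) q`_(m - k + i).
Definition E (q : {poly {poly C}}) : {poly {poly {poly C}}} := \poly_(k < m) Ek q k.
Definition Rv (q : {poly {poly C}}) : {poly {poly {poly C}}} :=
  \poly_(k < m.+1) (q`_(m - k))%:P.

Lemma Ek_rec (q : {poly {poly C}}) k : (k < m)%N -> Ek q k.+1 = (q`_(m - k.+1))%:P + 'X * Ek q k.
Proof.
move=> km; apply/polyP => j; rewrite coefD coefC coefXM !coef_poly.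
case: j => [|j] /=; first by rewrite addn0 addr0.
rewrite add0r ltnS; case: ifP => // _; congr (q`_ _); lia.
Qed.

Lemma Ek_m (q : {poly {poly C}}) : (size q <= m.+1)%N -> Ek q m = q.
Proof.
move=> sq; apply/polyP => j; rewrite coef_poly subnn add0n.
by case: ifP => // /negbT; rewrite -leqNgt => h; rewrite nth_default //; apply: leq_trans h.
Qed.

Lemma KEY (q : {poly {poly C}}) : (size q <= m.+1)%N ->
  (1 - ('X%:P) * 'X) * E q = Rv q - 'X^m * q%:P.
Proof.
move=> sq; apply/polyP => k.
rewrite mulrBl mul1r -mulrA coefB coefCM coefXM coefB coefXnM coefC !coef_poly.
case: k => [|k] /=.
  have [m0|mpos] := posnP m.
    move: sq; rewrite m0 /= => sq.
    by rewrite mulr0 subrr subn0 {2}(size1_polyC sq) subrr.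
  rewrite mulr0 !subr0 /Ek subn0; apply/polyP => j; rewrite coef_poly coefC.
  by case: j => [|j] //=; rewrite addn0.
have [hk|hk] := ltnP k.+1 m.
  have hk' : (k < m)%N by lia.
  rewrite hk' ltnS (ltnW hk) subr0 Ek_rec //.
  by rewrite addrK.
simpl.
have := hk; rewrite leq_eqVlt => /orP [/eqP ek|hk2].
  have hm : (k < m)%N by lia.
  rewrite hm ltnS hm -ek subnn eqxx /=.
  have hq := Ek_rec q hm; rewrite -ek Ek_m // subnn in hq.
  have hX : 'X * Ek q k = q - (q`_0)%:P by rewrite {2}hq addrAC subrr add0r.
  by rewrite hX sub0r opprB.
have h1 : (k < m)%N = false by apply/negbTE; lia.
have h2 : (k.+1 < m.+1)%N = false by apply/negbTE; lia.
have h3 : ((k.+1 - m)%N == 0%N) = false by apply/negbTE; lia.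
by rewrite h1 h2 h3 mulr0 !subrr.
Qed.

Definition ptl := refl n m p.
Local Notation pt := ptl.
Definition Bm := - E p.
Definition Lp := p%:P * E pt + pt%:P * Bm.

Lemma size_pt : (size pt <= m.+1)%N.
Proof. exact: size_poly. Qed.

Lemma size_pt_coef j : leq (size (pt`_j)) n.+1.
Proof. rewrite /ptl /refl coef_poly; case: ifP => _; [exact: size_poly | by rewrite size_poly0]. Qed.

Lemma Nid : (size p <= m.+1)%N ->
  (1 - ('X%:P) * 'X) * Lp = p%:P * Rv pt - pt%:P * Rv p.
Proof.
move=> sp; rewrite /Lp /Bm mulrDr [_ * (p%:P * _)]mulrCA [_ * (pt%:P * _)]mulrCA mulrN (KEY size_pt) (KEY sp).
rewrite mulrN !mulrBr opprB.
rewrite [pt%:P * ('X^m * _)]mulrCA [p%:P * ('X^m * _)]mulrCA [pt%:P * p%:P]mulrC.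
by rewrite addrA subrK.
Qed.

Lemma size_sum_le (T : nzRingType) (I : Type) (r : seq I) (P : pred I) (F : I -> {poly T}) d :
  (forall i, P i -> leq (size (F i)) d) -> leq (size (\sum_(i <- r | P i) F i)) d.
Proof.
move=> h; apply: (big_ind (fun x : {poly T} => leq (size x) d)) => //.
- by rewrite size_poly0.
- by move=> x y hx hy; apply: leq_trans (size_add _ _) _; rewrite geq_max hx hy.
Qed.

Lemma zdeg_mul (a b : {poly {poly C}}) da db :
  (forall j, leq (size (a`_j)) da.+1) -> (forall j, leq (size (b`_j)) db.+1) ->
  forall j, leq (size ((a * b)`_j)) (da + db).+1.
Proof.
move=> ha hb j; rewrite coefM; apply: size_sum_le => i _.
apply: leq_trans (size_mul_leq _ _) _.
have := ha i; have := hb (j - i)%N. set x := size _; set y := size _. move=> h1 h2. rewrite -subn1 leq_subLR; apply: leq_trans (leq_add h2 h1) _; lia.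
Qed.

Lemma zdeg_E (q : {poly {poly C}}) d : (forall j, leq (size (q`_j)) d) ->
  forall k j, leq (size (((E q)`_k)`_j)) d.
Proof.
move=> h k j; rewrite /E coef_poly; case: ifP => _; last by rewrite coef0 size_poly0.
by rewrite /Ek coef_poly; case: ifP => _; [exact: h| rewrite size_poly0].
Qed.

Lemma coefLp k : Lp`_k = p * (E pt)`_k - pt * (E p)`_k.
Proof. by rewrite /Lp /Bm coefD !coefCM coefN mulrN. Qed.

Lemma size_Lp : (size Lp <= m)%N.
Proof.
rewrite /Lp; apply: leq_trans (size_add _ _) _; rewrite geq_max.
by rewrite !mul_polyC !(leq_trans (size_scale_leq _ _)) // ?size_opp size_poly.
Qed.


Lemma coefRv (q : {poly {poly C}}) k : (Rv q)`_k = if (k < m.+1)%N then (q`_(m - k))%:P else 0.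
Proof. by rewrite /Rv coef_poly. Qed.

Lemma size_Cmul_le (c P : {poly {poly C}}) d : leq (size c) 1 -> leq (size P) d -> leq (size (P * c)) d.
Proof.
move=> hc hP; rewrite [c](size1_polyC hc) mulrC mul_polyC.
exact: leq_trans (size_scale_leq _ _) hP.
Qed.

Lemma wdeg_Lp : leq (size p) m.+1 -> forall k, leq (size (Lp`_k)) m.
Proof.
move=> sp.
have hN : forall k, leq (size (Lp`_k.+1 - 'X * Lp`_k)) m.+1.
  move=> k; have := congr1 (fun P : {poly {poly {poly C}}} => P`_k.+1) (Nid sp).
  rewrite mulrBl mul1r -mulrA coefB coefCM coefXM /= => ->.
  rewrite coefB !coefCM !coefRv.
  apply: leq_trans (size_add _ _) _; rewrite size_opp geq_max.
  by case: ifP => _; rewrite ?mulr0 ?size_poly0 // !size_Cmul_le // ?size_polyC ?leq_b1 ?size_pt.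
have hj : forall j, leq (size (Lp`_(m - j))) m.
  elim=> [|j IH]; first by rewrite subn0 nth_default ?size_Lp // size_poly0.
  have [mj|mj] := leqP m j.
    by have -> : (m - j.+1 = m - j)%N by lia.
  have hk : (m - j = (m - j.+1).+1)%N by lia.
  rewrite hk in IH; have := hN (m - j.+1)%N.
  set P := Lp`_(m - j.+1); set Q := Lp`_(m - j.+1).+1 => h.
  have e : 'X * P = Q - (Q - 'X * P) by rewrite opprB addrC subrK.
  have : leq (size ('X * P)) m.+1.
    rewrite e; apply: leq_trans (size_add _ _) _; rewrite size_opp geq_max h andbT.
    exact: leq_trans IH _.
  have [->|P0] := eqVneq P 0; first by rewrite size_poly0.
  by rewrite mulrC size_mulX.
move=> k; have [km|km] := ltnP k m; last by rewrite nth_default ?size_poly0 // (leq_trans size_Lp).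
by have := hj (m - k)%N; rewrite subKn // ltnW.
Qed.

Lemma degs3_E (q : {poly {poly C}}) : (1 <= m)%N -> (forall j, leq (size (q`_j)) n.+1) ->
  degs3 n (m - 1) (m - 1) (E q).
Proof.
move=> m1 hq; rewrite /degs3 subn1 prednK //; split; first exact: size_poly.
split; last by move=> k j; apply: zdeg_E.
move=> k; rewrite /E coef_poly; case: ifP => km; last by rewrite size_poly0.
exact: leq_trans (size_poly _ _) km.
Qed.

Lemma degs3_Bm : (1 <= m)%N -> (forall j, leq (size (p`_j)) n.+1) ->
  degs3 n (m - 1) (m - 1) Bm.
Proof.
move=> m1 hq; have [h1 [h2 h3]] := degs3_E m1 hq.
rewrite /degs3 /Bm size_opp; split => //; split=> [k|k j]; rewrite coefN ?size_opp //.
by rewrite coefN size_opp.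
Qed.

Lemma degs3_Lp : (1 <= m)%N -> leq (size p) m.+1 -> (forall j, leq (size (p`_j)) n.+1) ->
  degs3 (2 * n) (m - 1) (m - 1) Lp.
Proof.
move=> m1 sp hq; rewrite /degs3 subn1 prednK //; split; first exact: size_Lp.
split; first exact: wdeg_Lp.
move=> k j; rewrite coefLp coefB; apply: leq_trans (size_add _ _) _.
rewrite size_opp geq_max mul2n -addnn.
apply/andP; split.
  by apply: zdeg_mul hq _ j => i; apply: (zdeg_E (q := pt)) => l; apply: size_pt_coef.
by apply: zdeg_mul _ _ j => i; [apply: size_pt_coef | apply: zdeg_E hq k i].
Qed.


End Main.


Lemma sum_rev (R : nmodType) N (F : nat -> R) :
  \sum_(i < N.+1) F i = \sum_(i < N.+1) F (N - i)%N.
Proof.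
rewrite -(big_mkord xpredT F) big_rev_mkord subn0.
by apply: eq_bigr => i _; rewrite subSS.
Qed.

Section Ev.
Variable C : numClosedFieldType.
Variables (n m : nat) (p : {poly {poly C}}).
Hypothesis hq : forall j, leq (size (p`_j)) n.+1.
Hypothesis sp : leq (size p) m.+1.
Local Notation pt := (ptl n m p).

Lemma ev2E (q : {poly {poly C}}) z w N : leq (size q) N ->
  ev2 q z w = \sum_(j < N) (q`_j).[z] * w ^+ j.
Proof.
move=> hN; rewrite /ev2 (horner_coef_wide _ hN) horner_sum; apply: eq_bigr => j _.
by rewrite hornerM -rmorphXn hornerC.
Qed.

Lemma conjV' (z : C) : ((z^*)^-1)^* = z^-1.
Proof. by rewrite fmorphV; congr (_^-1); apply: conjCK. Qed.

Lemma powrev (z : C) (i k : nat) : z != 0 -> (i <= k)%N ->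
  z ^+ (k - i) = z ^+ k * (z^-1) ^+ i.
Proof. by move=> z0 ik; rewrite exprVn exprB ?unitfE. Qed.

Lemma F1 j (z : C) : leq j m -> z != 0 ->
  (pt`_(m - j)).[z] = z ^+ n * ((p`_j).[(z^*)^-1])^*.
Proof.
move=> jm z0.
rewrite /ptl /refl coef_poly ltnS leq_subr subKn // horner_poly.
rewrite (horner_coef_wide _ (hq j)) rmorph_sum mulr_sumr /=.
rewrite (reindex_inj rev_ord_inj) /=; apply: eq_bigr => i _; rewrite subSS.
rewrite rmorphM rmorphXn /= conjV' subKn ?leq_ord // powrev ?leq_ord //.
by rewrite mulrCA mulrA.
Qed.


Lemma F2 j (z : C) : leq j m -> z != 0 ->
  (p`_(m - j)).[z] = z ^+ n * ((pt`_j).[(z^*)^-1])^*.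
Proof.
move=> jm z0.
have z1 : (z^*)^-1 != 0 by rewrite invr_eq0 conjC_eq0.
have := F1 (leq_subr j m) z1; rewrite subKn // conjV' invrK => ->.
by rewrite rmorphM rmorphXn /= conjCK conjV' mulrA -exprMn mulfV // expr1n mul1r.
Qed.

Lemma REF (z w : C) : z != 0 -> w != 0 ->
  ev2 pt z w = z ^+ n * w ^+ m * (ev2 p (z^*)^-1 (w^*)^-1)^*.
Proof.
move=> z0 w0; rewrite (ev2E _ _ (size_pt n m p)) (ev2E _ _ sp).
rewrite (reindex_inj rev_ord_inj) /= rmorph_sum mulr_sumr; apply: eq_bigr => i _.
by rewrite !subSS (F1 (ltn_ord i)) // rmorphM rmorphXn /= conjV' (powrev w0 (ltn_ord i)) !exprS [X in _ * X = _]mulrACA mulfV // mul1r mulrACA.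
Qed.

Lemma ev3Rv (q : {poly {poly C}}) z w e :
  ev3 (Rv m q) z w e = \sum_(k < m.+1) (q`_(m - k)).[z] * e ^+ k.
Proof.
rewrite /ev3 /Rv horner_poly !horner_sum; apply: eq_bigr => k _.
by rewrite !hornerE.
Qed.

Lemma R1 (z w eta : C) : z != 0 ->
  ev3 (Rv m pt) z w (eta^*) = z ^+ n * (ev2 p (z^*)^-1 eta)^*.
Proof.
move=> z0; rewrite ev3Rv (ev2E _ _ sp) rmorph_sum mulr_sumr; apply: eq_bigr => k _.
by rewrite (F1 (ltn_ord k)) // rmorphM rmorphXn mulrA.
Qed.

Lemma R2 (z w eta : C) : z != 0 ->
  ev3 (Rv m p) z w (eta^*) = z ^+ n * (ev2 pt (z^*)^-1 eta)^*.
Proof.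
move=> z0; rewrite ev3Rv (ev2E _ _ (size_pt n m p)) rmorph_sum mulr_sumr; apply: eq_bigr => k _.
by rewrite (F2 (ltn_ord k)) // rmorphM rmorphXn mulrA.
Qed.

Lemma ev3M (P Q : {poly {poly {poly C}}}) z w e : ev3 (P * Q) z w e = ev3 P z w e * ev3 Q z w e.
Proof. by rewrite /ev3 !hornerM. Qed.
Lemma ev3B (P Q : {poly {poly {poly C}}}) z w e : ev3 (P - Q) z w e = ev3 P z w e - ev3 Q z w e.
Proof. by rewrite /ev3 !hornerE. Qed.
Lemma ev3C (q : {poly {poly C}}) z w e : ev3 q%:P z w e = ev2 q z w.
Proof. by rewrite /ev3 hornerC. Qed.

Lemma Nev (z w e : C) :
  (1 - w * e) * ev3 (Lp n m p) z w e = ev2 p z w * ev3 (Rv m pt) z w e - ev2 pt z w * ev3 (Rv m p) z w e.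
Proof.
have h := congr1 (fun P => ev3 P z w e) (Nid n sp); rewrite /= !ev3M !ev3B !ev3M !ev3C in h.
rewrite -h; congr (_ * _); by rewrite /ev3 /ev2 !hornerE.
Qed.

Lemma Lfun_eq (z w eta : C) : z != 0 -> w * eta^* != 1 ->
  Lfun n m p z w eta = evL (Lp n m p) z w eta.
Proof.
move=> z0 we; rewrite /Lfun /evL.
have we' : 1 - w * eta^* != 0 by rewrite subr_eq0 eq_sym.
apply: (mulfI we'); rewrite Nev R1 // R2 // /ptl.
by rewrite mulrC divfK // mulrBr !(mulrCA (z ^+ n)).
Qed.

End Ev.


Section Sym.
Variable C : numClosedFieldType.
Variables (n m : nat) (p : {poly {poly C}}).
Hypothesis hq : forall j, leq (size (p`_j)) n.+1.
Hypothesis sp : leq (size p) m.+1.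
Local Notation pt := (ptl n m p).
Local Notation Lp := (Lp n m p).

Lemma Rv_rev (q : {poly {poly C}}) z w (e : C) : e != 0 -> leq (size q) m.+1 ->
  ev3 (Rv m q) z w e = e ^+ m * ev2 q z e^-1.
Proof.
move=> e0 sq; rewrite ev3Rv (ev2E _ _ sq) mulr_sumr (reindex_inj rev_ord_inj) /=.
apply: eq_bigr => k _; rewrite !subSS (subKn (ltn_ord k : (k <= m)%N)) (powrev e0 (ltn_ord k : (k <= m)%N)).
by rewrite mulrCA.
Qed.

Lemma LG (z w e : C) : e != 0 ->
  (1 - w * e) * ev3 Lp z w e =
  e ^+ m * (ev2 p z w * ev2 pt z e^-1 - ev2 pt z w * ev2 p z e^-1).
Proof.
move=> e0; rewrite (Nev n sp) !Rv_rev // ?size_pt //.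
by rewrite mulrBr !(mulrCA (e ^+ m)).
Qed.

End Sym.


Section Sym2.
Variable C : numClosedFieldType.
Variables (n m : nat) (p : {poly {poly C}}).
Hypothesis hq : forall j, leq (size (p`_j)) n.+1.
Hypothesis sp : leq (size p) m.+1.
Local Notation pt := (ptl n m p).
Local Notation Lp := (Lp n m p).

Lemma SYM (z w e : C) : z != 0 -> w != 0 -> e != 0 -> w * e != 1 -> (1 <= m)%N ->
  ev3 Lp z w e = z ^+ (2 * n) * (w * e) ^+ (m - 1) * (ev3 Lp (z^*)^-1 (w^*)^-1 (e^*)^-1)^*.
Proof.
move=> z0 w0 e0 we m1.
have cz : (z^*)^-1 != 0 by rewrite invr_eq0 conjC_eq0.
have cw : (w^*)^-1 != 0 by rewrite invr_eq0 conjC_eq0.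
have ce : (e^*)^-1 != 0 by rewrite invr_eq0 conjC_eq0.
have D0 : 1 - w * e != 0 by rewrite subr_eq0 eq_sym.
have D1 : 1 - (w^*)^-1 * (e^*)^-1 != 0.
  rewrite subr_eq0 eq_sym -invfM -rmorphM invr_eq1.
  by apply: contra we => /eqP h; rewrite -(conjCK (w * e)) h rmorph1.
have E1 : ev3 Lp z w e = e ^+ m * (ev2 p z w * ev2 pt z e^-1 - ev2 pt z w * ev2 p z e^-1) / (1 - w * e).
  by rewrite -(LG n sp z w e0) [(1 - _) * _]mulrC mulfK.
have E2 := LG n sp z^*^-1 w^*^-1 ce.
have E2' : ev3 Lp z^*^-1 w^*^-1 e^*^-1 = ((e^*)^-1) ^+ m * (ev2 p z^*^-1 w^*^-1 * ev2 pt z^*^-1 e^* - ev2 pt z^*^-1 w^*^-1 * ev2 p z^*^-1 e^*) / (1 - w^*^-1 * e^*^-1).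
  by rewrite invrK in E2; rewrite -E2 [(1 - _) * _]mulrC mulfK.
have r1 := REF hq sp z0 w0.
have r2 := REF hq sp z0 (invr_neq0 e0); rewrite fmorphV invrK in r2.
have r3 := REF hq sp cz cw; rewrite !conjV' !invrK in r3.
have ce' : e^* != 0 by rewrite conjC_eq0.
have r4 := REF hq sp cz ce'; rewrite !conjV' conjCK !invrK in r4.
rewrite E1 E2' r1 r2 r3 r4.
rewrite !(rmorphM, rmorphB, rmorphXn, fmorphV, rmorph1, conjCK) /= !conjCK.
move: (ev2 p z w) (ev2 p z e^-1) ((ev2 p z^*^-1 w^*^-1)^*) ((ev2 p z^*^-1 e^*)^*) => A B A' B'.
rewrite !exprVn -(subnK m1) addn1 mul2n -addnn exprD.
move: (m - 1)%N => k.
have D2 : 1 - w^-1 / e != 0 by rewrite subr_eq0 eq_sym -invfM invr_eq1.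
rewrite subn1 /= exprMn !exprS.
have e1 : e ^+ k != 0 by rewrite expf_neq0.
have w1 : w ^+ k != 0 by rewrite expf_neq0.
have zn : z ^+ n != 0 by rewrite expf_neq0.
move: (e ^+ k) (w ^+ k) (z ^+ n) e1 w1 zn => Ek Wk Zn e1 w1 zn.
field.
by rewrite e0 w0 w1 zn e1 D0 subr_eq0 we.
Qed.

End Sym2.


Lemma poly_all0 (C : numClosedFieldType) (q : {poly C}) : (forall x, q.[x] = 0) -> q = 0.
Proof.
move=> h; apply/eqP; apply/negPn/negP => q0.
pose rs := [seq (i%:R : C) | i <- iota 0 (size q)].
have h2 : all (root q) rs by apply/allP => x _; rewrite /root h.
have h3 : uniq rs.
  by rewrite map_inj_uniq ?iota_uniq // => i j /eqP; rewrite eqr_nat => /eqP.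
by have := max_poly_roots q0 h2 h3; rewrite size_map size_iota ltnn.
Qed.

Section Sym3.
Variable C : numClosedFieldType.
Variables (n m : nat) (p : {poly {poly C}}).
Hypothesis hq : forall j, leq (size (p`_j)) n.+1.
Hypothesis sp : leq (size p) m.+1.
Hypothesis m1 : (1 <= m)%N.
Local Notation pt := (ptl n m p).
Local Notation Lp := (Lp n m p).

Lemma ev3E (P : {poly {poly {poly C}}}) z w e N : leq (size P) N ->
  ev3 P z w e = \sum_(k < N) ev2 P`_k z w * e ^+ k.
Proof.
move=> hN; rewrite /ev3 (horner_coef_wide _ hN) !horner_sum; apply: eq_bigr => k _.
by rewrite hornerM -!rmorphXn hornerC hornerM hornerC.
Qed.

Definition Psi (z w : C) : {poly C} :=
  \poly_(k < m) (z ^+ (2 * n) * w ^+ (m - 1) * (ev2 Lp`_(m - k.+1) (z^*)^-1 (w^*)^-1)^*).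

Lemma Psi_ev (z w e : C) : e != 0 ->
  (Psi z w).[e] = z ^+ (2 * n) * (w * e) ^+ (m - 1) * (ev3 Lp (z^*)^-1 (w^*)^-1 (e^*)^-1)^*.
Proof.
move=> e0; rewrite horner_poly (ev3E _ _ _ (size_Lp n m p)) rmorph_sum mulr_sumr.
rewrite (reindex_inj rev_ord_inj) /=; apply: eq_bigr => k _.
rewrite rmorphM rmorphXn /= conjV' exprMn.
have hk : e ^+ (m - k.+1) = e ^+ (m - 1) * e^-1 ^+ k.
  rewrite -powrev //; last by have := ltn_ord k; lia.
  by congr (_ ^+ _); have := ltn_ord k; lia.
have idx : (m - (m - k.+1).+1 = k)%N by have := ltn_ord k; lia.
by rewrite hk idx !mulrA; congr (_ * _); rewrite mulrAC.
Qed.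

Lemma Phi_ev (z w e : C) : (\poly_(k < m) ev2 Lp`_k z w).[e] = ev3 Lp z w e.
Proof. by rewrite horner_poly (ev3E _ _ _ (size_Lp n m p)). Qed.

Lemma PhiPsi (z w : C) : z != 0 -> w != 0 -> \poly_(k < m) ev2 Lp`_k z w = Psi z w.
Proof.
move=> z0 w0; apply/eqP; rewrite -subr_eq0; apply/eqP.
set D := _ - _.
have Q0 : 'X * (1 - w%:P * 'X) != 0 :> {poly C}.
  rewrite mulf_neq0 ?polyX_eq0 //; apply/eqP => /(congr1 (fun q : {poly C} => q`_0)).
  by rewrite coefB coef1 coefCM coefX mulr0 subr0 eqxx coef0 => /eqP; rewrite oner_eq0.
suff : D * ('X * (1 - w%:P * 'X)) = 0 by move/eqP; rewrite mulf_eq0 (negPf Q0) orbF => /eqP.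
apply: poly_all0 => x; rewrite !hornerM !hornerX !hornerD !hornerN !hornerM !hornerX !hornerC.
have [->|x0] := eqVneq x 0; first by rewrite !mul0r mulr0.
have [wx|wx] := eqVneq (w * x) 1; first by rewrite wx subrr !mulr0.
by rewrite Phi_ev Psi_ev // -SYM // subrr mul0r.
Qed.

End Sym3.

Section Sym4.
Variable C : numClosedFieldType.
Variables (n m : nat) (p : {poly {poly C}}).
Hypothesis hq : forall j, leq (size (p`_j)) n.+1.
Hypothesis sp : leq (size p) m.+1.
Hypothesis m1 : (1 <= m)%N.
Local Notation Lp := (Lp n m p).

Lemma sym3a (z w eta : C) : z != 0 -> w != 0 -> eta != 0 ->
  evL Lp z w eta = z ^+ (2 * n) * (w * eta^*) ^+ (m - 1) *
       (evL Lp (z^*)^-1 (w^*)^-1 (eta^*)^-1)^*.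
Proof.
move=> z0 w0 e0; rewrite /evL -Phi_ev (PhiPsi hq sp m1 z0 w0) Psi_ev ?conjC_eq0 //.
by rewrite fmorphV.
Qed.

Lemma sym3b (k : nat) (z w : C) : leq k (m - 1) -> z != 0 -> w != 0 ->
  ev2 Lp`_k z w = z ^+ (2 * n) * w ^+ (m - 1) * (ev2 Lp`_(m - k - 1) (z^*)^-1 (w^*)^-1)^*.
Proof.
move=> km z0 w0; have := congr1 (fun q : {poly C} => q`_k) (PhiPsi hq sp m1 z0 w0).
rewrite /Psi !coef_poly.
have -> : (k < m)%N by lia.
have -> : (m - k.+1 = m - k - 1)%N by lia.
by [].
Qed.

End Sym4.


Section Ind.
Variable C : numClosedFieldType.
Variables (n m : nat) (p : {poly {poly C}}).
Hypothesis hq : forall j, leq (size (p`_j)) n.+1.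
Hypothesis sp : leq (size p) m.+1.
Hypothesis m1 : (1 <= m)%N.
Hypothesis st : stable p.
Local Notation pt := (ptl n m p).
Local Notation Lp := (Lp n m p).

Local Notation phi := (map_poly (horner_eval (1 : C))).

Lemma phi_ev q (x : C) : (phi q).[x] = ev2 q 1 x.
Proof.
have := horner_map (horner_eval (1 : C)) q (x%:P).
by rewrite /= !horner_evalE hornerC => ->.
Qed.

Lemma phi_coef q i : (phi q)`_i = (q`_i).[1].
Proof. by rewrite coef_map. Qed.

Lemma gm_neq0 : (phi pt)`_m != 0.
Proof.
have h := F1 hq (leq0n m) (oner_neq0 C); rewrite subn0 in h.
rewrite phi_coef h expr1n mul1r rmorph1 invr1.
have h1 : `|1 : C| <= 1 by rewrite normr1.
have h0 : `|0 : C| <= 1 by rewrite normr0 ler01.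
rewrite conjC_eq0; have := st h1 h0.
by rewrite /ev2 horner_coef0.
Qed.


Lemma cop : coprimep (phi pt) (phi p).
Proof.
apply: Pdiv.ClosedField.root_coprimep => x /rootP gx.
rewrite phi_ev; apply/negP => /eqP fx.
have h1 : `|1 : C| <= 1 by rewrite normr1.
have nx : ~~ (`|x| <= 1) by apply/negP => hx; have := st h1 hx; rewrite fx eqxx.
have x0 : x != 0 by apply: contra nx => /eqP ->; rewrite normr0 ler01.
move: gx; rewrite phi_ev (REF hq sp (oner_neq0 C) x0) => /eqP.
rewrite expr1n mul1r mulf_eq0 expf_eq0 (negPf x0) andbF /= conjC_eq0 rmorph1 invr1 => /eqP h.
have : `|(x^*)^-1| <= 1.
  rewrite normfV norm_conjC invf_le1 ?normr_gt0 //; apply: ltW.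
  by rewrite real_ltNge ?normr_real ?real1.
by move/(st h1); rewrite h eqxx.
Qed.

Lemma size_phi q : leq (size (phi q)) (size q).
Proof.
by apply/leq_sizeP => j hj; rewrite phi_coef nth_default // horner0.
Qed.

Lemma IND (d : 'I_m -> C) :
  \sum_(k < m) (d k)%:P%:P * Lp`_k = 0 -> forall k, d k = 0.
Proof.
move=> hd.
pose S := \sum_(k < m) (d k)%:P * phi (Ek m pt k).
pose T := \sum_(k < m) (d k)%:P * phi (Ek m p k).
have key : phi p * S = phi pt * T.
  apply/eqP; rewrite -subr_eq0; apply/eqP.
  have := congr1 phi hd; rewrite rmorph0 rmorph_sum => <-.
  rewrite /S /T !mulr_sumr -sumrB; apply: eq_bigr => k _.
  rewrite rmorphM /= map_polyC /= horner_evalE hornerC coefLp /E !coef_poly (ltn_ord k).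
  by rewrite rmorphB !rmorphM /= mulrBr (mulrCA (phi p)) (mulrCA (phi pt)).
have dvd : phi pt %| S by rewrite -(Gauss_dvdpl S cop) mulrC key dvdp_mulIl.
have sg : (m < size (phi pt))%N.
  by rewrite ltnNge; apply: contra gm_neq0 => h; rewrite nth_default.
have sS : leq (size S) m.
  apply: size_sum_le => k _; rewrite mul_polyC; apply: leq_trans (size_scale_leq _ _) _.
  apply: leq_trans (size_phi _) _; rewrite /Ek; apply: leq_trans (size_poly _ _) _.
  exact: ltn_ord k.
have S0 : S = 0.
  apply/eqP; apply: contraT => S0; have := dvdp_leq S0 dvd.
  by move=> h; have := leq_trans h sS; rewrite leqNgt sg.
have coefS j : S`_j = \sum_(k < m) d k * (if (j < k.+1)%N then (pt`_(m - k + j)).[1] else 0).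
  rewrite /S coef_sum; apply: eq_bigr => k _; rewrite coefCM phi_coef /Ek coef_poly.
  by case: ifP => _; rewrite ?horner0.
have tri : forall t, (t <= m)%N -> forall k : 'I_m, (m - t <= k)%N -> d k = 0.
  elim=> [|t IH] tm k hk; first by have := ltn_ord k; lia.
  have [hk2|hk2] := leqP (m - t) k; first by apply: IH => //; lia.
  have ek : (nat_of_ord k = m - t.+1)%N by lia.
  have := coefS k; rewrite S0 coef0 (bigD1 k) //= ltnSn subnK ?(ltnW (ltn_ord k)) //.
  rewrite big1 ?addr0.
    have g0 := gm_neq0; rewrite phi_coef in g0.
    by move=> /esym/eqP; rewrite mulf_eq0 (negPf g0) orbF => /eqP.
  move=> i ik; case: ifP => hi; last by rewrite mulr0.
  move: ik; rewrite -val_eqE /= => ik.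
  by rewrite (IH (ltnW tm) i) ?mul0r //; lia.
move=> k; apply: (tri m (leqnn m)); lia.
Qed.

End Ind.


Section Van.
Variable C : numClosedFieldType.
Variables (n m : nat) (p : {poly {poly C}}).
Local Notation Lp := (Lp n m p).

Lemma levE (x : C) : Lp.[x%:P%:P] = \sum_(k < m) (x ^+ k)%:P%:P * Lp`_k.
Proof.
rewrite (horner_coef_wide _ (size_Lp n m p)); apply: eq_bigr => k _.
by rewrite mulrC -!rmorphXn.
Qed.

Lemma levS (c a : 'I_m -> C) :
  \sum_(i < m) (c i)%:P%:P * Lp.[(a i)%:P%:P] =
  \sum_(k < m) (\sum_(i < m) c i * a i ^+ k)%:P%:P * Lp`_k.
Proof.
under eq_bigr => i _ do rewrite levE mulr_sumr.
rewrite exchange_big /=; apply: eq_bigr => k _.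
rewrite !rmorph_sum mulr_suml; apply: eq_bigr => i _.
by rewrite !rmorphM mulrA.
Qed.

Definition V : 'M[C]_m := Vandermonde m (\row_(j < m) ((j : nat)%:R : C)).

Lemma VE k i : V k i = ((i : nat)%:R) ^+ k.
Proof. by rewrite /V /Vandermonde !mxE. Qed.

Lemma V_unit : V \in unitmx.
Proof.
rewrite unitmxE det_Vandermonde unitfE; apply/prodf_neq0 => i _.
apply/prodf_neq0 => j ij; rewrite !mxE subr_eq0 eqr_nat.
by apply: contraTneq ij => ->; rewrite ltnn.
Qed.

End Van.


Unset Implicit Arguments.

Theorem mainTheorem2 (C : numClosedFieldType) (n m : nat) (p : {poly {poly C}}) :
  (1 <= n)%N -> (1 <= m)%N -> bideg n m p -> stable p ->
  exists Lp : {poly {poly {poly C}}},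
    (* (1) L is a polynomial in (z, w, conj eta) with the degree bounds *)
    (degs3 (2 * n) (m - 1) (m - 1) Lp /\
     forall z w eta : C, z != 0 -> w * eta^* != 1 ->
       Lfun n m p z w eta = evL Lp z w eta) /\
    (* (2) the polynomials L(.,.;eta), eta in C, span a space of dimension m *)
    (exists etas : 'I_m -> C,
       (forall c : 'I_m -> C,
          \sum_(i < m) (c i)%:P%:P * Lp.[(etas i)^*%:P%:P] = 0 -> forall i, c i = 0) /\
       (forall eta : C, exists c : 'I_m -> C,
          Lp.[eta^*%:P%:P] = \sum_(i < m) (c i)%:P%:P * Lp.[(etas i)^*%:P%:P])) /\
    (* (3) symmetry and its consequence for the coefficients a_k *)
    (forall z w eta : C, z != 0 -> w != 0 -> eta != 0 ->
       evL Lp z w eta =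
       z ^+ (2 * n) * (w * eta^*) ^+ (m - 1) *
       (evL Lp (z^*)^-1 (w^*)^-1 (eta^*)^-1)^*) /\
    (forall (k : nat) (z w : C), leq k (m - 1) -> z != 0 -> w != 0 ->
       ev2 Lp`_k z w =
       z ^+ (2 * n) * w ^+ (m - 1) * (ev2 Lp`_(m - k - 1) (z^*)^-1 (w^*)^-1)^*) /\
    (* (4) L = p A + ptilde B *)
    (exists A B : {poly {poly {poly C}}},
       degs3 n (m - 1) (m - 1) A /\ degs3 n (m - 1) (m - 1) B /\
       Lp = p%:P * A + (refl n m p)%:P * B).
Proof.
move=> n1 m1 [sp0 [hq _]] st.
have sp : leq (size p) m.+1 by rewrite sp0.
exists (Lp n m p).
split; first split.
- exact: degs3_Lp.
- by move=> z w eta z0 we; apply: Lfun_eq.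
split.
  exists (fun i : 'I_m => ((i : nat)%:R : C)).
  have cn : forall i : 'I_m, ((i : nat)%:R : C)^* = (i : nat)%:R by move=> i; rewrite rmorph_nat.
  split.
    move=> c; under eq_bigr => i _ do rewrite cn.
    rewrite levS => hd.
    have hd2 := IND hq sp m1 st hd.
    have hv : V C m *m (\col_i c i) = 0.
      apply/matrixP => k j; rewrite !mxE; have := hd2 k; rewrite /= => h.
      rewrite -[RHS]h; apply: eq_bigr => i _; rewrite VE !mxE mulrC.
      by [].
    move=> i; have := congr1 (fun M : 'cV[C]_m => (invmx (V C m) *m M) i 0) hv.
    by rewrite /= mulKmx ?V_unit // mulmx0 !mxE.
  move=> eta.
  pose u := invmx (V C m) *m (\col_(k < m) (eta^* ^+ k)).
  exists (fun i => u i 0).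
  under [RHS]eq_bigr => i _ do rewrite cn.
  rewrite levS levE; apply: eq_bigr => k _; congr (_%:P%:P * _).
  have := congr1 (fun M : 'cV[C]_m => M k 0) (mulKVmx (V_unit C m) (\col_(k < m) (eta^* ^+ k))).
  rewrite /= !mxE => <-; apply: eq_bigr => i _; rewrite VE mulrC.
  by [].
split.
  by move=> z w eta z0 w0 e0; apply: sym3a.
split.
  by move=> k z w km z0 w0; apply: sym3b.
exists (E m (ptl n m p)), (Bm m p).
split; first exact: degs3_E m1 (size_pt_coef n m p).
split; first exact: degs3_Bm.
by [].
Qed.
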